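(* Let $n\ge2$, let $A=[a_{kl}]$ be a real $n\times n$ matrix with zero diagonal and $f(\sigma)=\sum_{p=1}^{n-1}\sum_{q=p+1}^n a_{\sigma(p)\sigma(q)}$ its LOP objective function on $\Sigma_n$. For $i\in\{1,\dots,n-1\}$ and $j\in\{1,\dots,n\}$ let $\mu_{ij}=\frac{1}{(n-1)!}\sum_{\sigma:\sigma(i)=j}f(\sigma)$ and $\mu_{i+1\,j}=\frac{1}{(n-1)!}\sum_{\sigma:\sigma(i+1)=j}f(\sigma)$. Then $$\mu_{i+1\,j}-\mu_{ij}=\frac{1}{n-1}\sum_{k\ne j}\bigl(a_{kj}-a_{jk}\bigr).$$
   Context: $\Sigma_n$ is the symmetric group on $\{1,\dots,n\}$; $\sigma(p)$ is the row/column index placed in position $p$. *)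

(* Defs.v *)
From HB Require Import structures.
From mathcomp Require Import all_boot all_order all_algebra all_fingroup.
Set Implicit Arguments. Unset Strict Implicit. Unset Printing Implicit Defensive.
Import Order.TTheory GRing.Theory Num.Theory.
Local Open Scope ring_scope.

(* Indices {1..n} are represented 0-based by 'I_n. A permutation s : 'S_n
   places index s p at position p. *)

Definition lop_obj (R : pzRingType) (n : nat) (A : 'M[R]_n) (s : 'S_n) : R :=
  \sum_(p < n) \sum_(q < n | (p < q)%N) A (s p) (s q).

Definition mu (R : fieldType) (n : nat) (A : 'M[R]_n) (i j : 'I_n) : R :=
  ((n.-1)`!%:R)^-1 * \sum_(s : 'S_n | s i == j) lop_obj A s.

(* Main.v *)
Require Import Defs.
From HB Require Import structures.
From mathcomp Require Import all_boot all_order all_algebra all_fingroup.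
From mathcomp Require Import zify ring.
Import Order.TTheory GRing.Theory Num.Theory.
Local Open Scope ring_scope.

Lemma key_bool (R : pzRingType) (a : R) (P Q I : nat) :
  (if ((if P == I then I.+1 else if P == I.+1 then I else P) <
      (if Q == I then I.+1 else if Q == I.+1 then I else Q))%N then a else 0) =
  (if (P < Q)%N then a else 0) + (if (P == I.+1) && (Q == I) then a else 0)
  - (if (P == I) && (Q == I.+1) then a else 0).
Proof.
case: (boolP (P == I)) => ?; case: (boolP (P == I.+1)) => ?;
case: (boolP (Q == I)) => ?; case: (boolP (Q == I.+1)) => ? /=;
repeat (match goal with |- context [if ?b then _ else _] =>
   let H := fresh in case: (boolP b) => H end; simpl);
  rewrite ?addr0 ?subr0 ?addrK ?subrr ?add0r //; exfalso; lia.
Qed.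

Lemma val_tperm n (i i1 p : 'I_n) (h : nat_of_ord i1 = i.+1) :
  nat_of_ord (tperm i i1 p) =
  (if nat_of_ord p == i then i.+1 else if nat_of_ord p == i.+1 then nat_of_ord i else p).
Proof.
rewrite -h; case: tpermP => [->|->|/eqP pi /eqP pi1]; rewrite ?eqxx //.
- by rewrite h; case: eqP => // /eqP; rewrite h; lia.
- by rewrite (inj_eq val_inj) (negbTE pi) (inj_eq val_inj) (negbTE pi1).
Qed.

Lemma sum2_ind (R : pzRingType) n (F : 'I_n -> 'I_n -> R) (a b : 'I_n) :
  \sum_(p < n) \sum_(q < n)
     (if (nat_of_ord p == a) && (nat_of_ord q == b) then F p q else 0) = F a b.
Proof.
rewrite (bigD1 a) //=.
rewrite [X in _ + X]big1 => [|p pa]; last first.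
  by apply: big1 => q _; rewrite (inj_eq val_inj) (negbTE pa).
rewrite addr0 (bigD1 b) //= !eqxx /= big1 ?addr0 // => q qb.
by rewrite ?eqxx /= (inj_eq val_inj) (negbTE qb).
Qed.

Lemma lop_swap (R : pzRingType) n (A : 'M[R]_n) (i i1 : 'I_n)
  (h : nat_of_ord i1 = i.+1) (s : 'S_n) :
  lop_obj A (tperm i i1 * s)%g = lop_obj A s - A (s i) (s i1) + A (s i1) (s i).
Proof.
rewrite /lop_obj.
have E : forall s' : 'S_n, \sum_(p < n) \sum_(q < n | (p < q)%N) A (s' p) (s' q)
   = \sum_(p < n) \sum_(q < n) (if (p < q)%N then A (s' p) (s' q) else 0).
  by move=> s'; apply: eq_bigr => p _; rewrite big_mkcond.
rewrite !E (reindex_inj (@perm_inj _ (tperm i i1))) /=.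
under eq_bigr => p _ do rewrite (reindex_inj (@perm_inj _ (tperm i i1))) /=.
under eq_bigr => p _ do under eq_bigr => q _ do
  rewrite !permM !tpermK !val_tperm // key_bool.
rewrite -(@sum2_ind _ _ (fun p q => A (s p) (s q)) i1 i).
rewrite -(@sum2_ind _ _ (fun p q => A (s p) (s q)) i i1).
rewrite h.
rewrite -!sumrB -!big_split /=; apply: eq_bigr => p _.
rewrite -!sumrB -!big_split /=; apply: eq_bigr => q _.
by rewrite addrAC.
Qed.

Lemma card_fix n (i j : 'I_n) :
  #|[pred s : 'S_n | s i == j]| = (n.-1)`!.
Proof.
rewrite -sum1_card (reindex_inj (mulIg (tperm i j))) /=.
have E : forall s : 'S_n, ((s * tperm i j)%g i == j) = (s i == i).
  by move=> s; rewrite permM -[RHS](inj_eq (@perm_inj _ (tperm i j))) tpermL.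
under eq_bigl => s do rewrite inE E.
rewrite sum1_card -[in RHS](card_ord n) -(cardsC1 i) -card_perm.
apply: eq_card => s; transitivity (s i == i); first by [].
symmetry; rewrite unfold_in; apply/subsetP/eqP => [H|H x].
  apply/eqP; apply: contraT => hi; have := H i; rewrite !inE eqxx /=.
  by move=> /(_ hi).
by rewrite !inE; apply: contra => /eqP ->; apply/eqP.
Qed.

Theorem proposition9 (R : realFieldType) (n : nat) (A : 'M[R]_n)
  (hn : (2 <= n)%N)
  (hdiag : forall k : 'I_n, A k k = 0)
  (i i1 : 'I_n) (hi1 : nat_of_ord i1 = i.+1) (j : 'I_n) :
  mu A i1 j - mu A i j =
    (n.-1%:R)^-1 * \sum_(k < n | k != j) (A k j - A j k).
Proof.
set g := fun k : 'I_n => A k j - A j k.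
set G := \sum_(k < n) g k.
have gj : g j = 0 by rewrite /g subrr.
have HG : \sum_(k < n | k != j) (A k j - A j k) = G.
  rewrite /G [RHS](bigD1 j) //= gj add0r; exact: eq_bigr.
set X := \sum_(s : 'S_n | s i == j) g (s i1).
have ii1 : i1 != i.
  apply/eqP => h; move: hi1; rewrite h; exact: n_Sn.
have stepA : \sum_(s : 'S_n | s i1 == j) lop_obj A s
           = \sum_(s : 'S_n | s i == j) lop_obj A s + X.
  rewrite (reindex_inj (mulgI (tperm i i1))) /= /X -big_split /=.
  under eq_bigl => s do rewrite permM tpermR.
  apply: eq_bigr => s /eqP sij.
  by rewrite lop_swap // sij /g addrA addrAC.
have stepB : forall p : 'I_n, p != i ->
    \sum_(s : 'S_n | s i == j) g (s p) = X.
  move=> p pi; rewrite /X [RHS](reindex_inj (mulgI (tperm i1 p))) /=.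
  under [RHS]eq_bigl => t do rewrite permM (tpermD ii1 pi).
  by apply: eq_bigr => s _; rewrite permM tpermL.
have stepC : X *+ (n.-1) = G *+ (n.-1)`!.
  transitivity (\sum_(p < n | p != i) \sum_(s : 'S_n | s i == j) g (s p)).
    rewrite (eq_bigr (fun _ => X)); last by move=> p /stepB.
    by rewrite sumr_const cardC1 card_ord.
  rewrite exchange_big /=.
  transitivity (\sum_(s : 'S_n | s i == j) G).
    apply: eq_bigr => s /eqP sij.
    have: \sum_(p < n) g (s p) = G.
      by rewrite /G [RHS](reindex_inj (@perm_inj _ s)).
    by move=> <-; rewrite [RHS](bigD1 i) //= sij gj add0r.
  by rewrite sumr_const card_fix.
rewrite HG /mu -mulrBr stepA addrAC subrr add0r.
have m0 : (n.-1)%:R != 0 :> R by rewrite pnatr_eq0; lia.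
have c0 : (n.-1)`!%:R != 0 :> R by rewrite pnatr_eq0 -lt0n fact_gt0.
have -> : X = G * (n.-1)`!%:R / (n.-1)%:R.
  by rewrite mulr_natr -stepC -[X *+ _]mulr_natr mulfK.
by rewrite [G * _]mulrC -mulrA mulKf // mulrC.
Qed.
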